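(* Let $k\ge 2$ be a non-square integer, let $0=t_0<t_1<\cdots$ be the increasing enumeration of all nonnegative integers $t$ with $kT_t$ triangular, let $\xi_n\ge 0$ satisfy $T_{\xi_n}=kT_{t_n}$, and let $r$ and $\kappa=t_{r-1}+t_r$ be as in Theorem 1. Then for every integer $n\ge r$, $$\left(\xi_n-\xi_{n-r}\right)^2-\kappa\left(\xi_n+2\xi_n\xi_{n-r}+\xi_{n-r}\right)=\xi_r\left(\xi_{r-1}+1\right).$$
   Context: $T_m=\frac{m(m+1)}{2}$ denotes the $m$-th triangular number; an integer is triangular if it equals $T_m$ for some integer $m\ge0$. Theorem 1 (referenced): for non-square $k\ge2$ there is a positive integer $r$ (the rank) such that with $\kappa=t_{r-1}+t_r$ one has $\kappa=\xi_r-\xi_{r-1}-1$, $(t_{2r}-t_{r-1})/t_r=2\kappa+3$, and $t_n=2(\kappa+1)t_{n-r}-t_{n-2r}+\kappa$, $\xi_n=2(\kappa+1)\xi_{n-r}-\xi_{n-2r}+\kappa$ for all $n\ge 2r$. *)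

(* Defs.v *)
From HB Require Import structures.
From mathcomp Require Import all_boot all_order all_algebra.
Set Implicit Arguments. Unset Strict Implicit. Unset Printing Implicit Defensive.

(* m-th triangular number T_m = m(m+1)/2 (the division is exact). *)
Definition T (m : nat) : nat := (m * m.+1) %/ 2.

Definition triangular (x : nat) : Prop := exists m, x = T m.

(* Main.v *)
Require Import Defs.
From HB Require Import structures.
From mathcomp Require Import all_boot all_order all_algebra.
From mathcomp Require Import zify ring lra.
Import Order.TTheory GRing.Theory Num.Theory.
Local Open Scope ring_scope.
Lemma Tev (z : nat) : (z * z.+1 = 2 * T z)%N.
Proof.
rewrite /T [RHS]mulnC divnK // dvdn2 oddM /=. by case: (odd z).
Qed.
Lemma normZ (k x y : nat) : T x = (k * T y)%N ->
  (2 * x%:Z + 1) ^+ 2 - k%:Z * (2 * y%:Z + 1) ^+ 2 = 1 - k%:Z.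
Proof.
move=> h.
have h2 : (x * x.+1 = k * (y * y.+1))%N by rewrite (Tev x) (Tev y) h mulnCA.
have hz : (x%:Z * (x%:Z + 1) = k%:Z * (y%:Z * (y%:Z + 1))).
  have := congr1 (fun n : nat => n%:Z) h2. rewrite /= !PoszM. by rewrite -[x.+1]addn1 -[y.+1]addn1 !PoszD.
have e : (2 * x%:Z + 1) ^+ 2 - k%:Z * (2 * y%:Z + 1) ^+ 2 - (1 - k%:Z)
   = 4 * (x%:Z * (x%:Z + 1) - k%:Z * (y%:Z * (y%:Z + 1))) by ring.
by apply/eqP; rewrite -subr_eq0 e hz subrr mulr0.
Qed.
Lemma key (k c a b y1 y2 : int) : c != 0 -> k != 1 ->
  a ^+ 2 - k * y1 ^+ 2 = 1 - k ->
  b ^+ 2 - k * y2 ^+ 2 = 1 - k ->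
  (2 * c * b - a) ^+ 2 - k * (2 * c * y2 - y1) ^+ 2 = 1 - k ->
  a ^+ 2 + b ^+ 2 - 2 * c * a * b = (1 - k) * (1 - c ^+ 2).
Proof.
move=> hc hk na nb ne.
have hN : 1 - k != 0 by rewrite subr_eq0 eq_sym.
have hG : a * b - k * y1 * y2 = c * (1 - k).
  have e1 : 4 * c * (c * (1 - k) - (a * b - k * y1 * y2)) =
    ((2 * c * b - a) ^+ 2 - k * (2 * c * y2 - y1) ^+ 2 - (1 - k))
    - (a ^+ 2 - k * y1 ^+ 2 - (1 - k)) - 4 * c ^+ 2 * (b ^+ 2 - k * y2 ^+ 2 - (1 - k)) by ring.
  move: e1; rewrite ne na nb !subrr mulr0 !subr0 => /eqP.
  rewrite mulf_eq0 mulf_eq0 (negbTE hc) orbF subr_eq0 => /orP [|/eqP //].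
  by [].
have e2 : (1 - k) * (a ^+ 2 + b ^+ 2 - 2 * c * a * b - (1 - k) * (1 - c ^+ 2)) =
   - (a ^+ 2 - (1 - k)) * (b ^+ 2 - k * y2 ^+ 2 - (1 - k))
   - (a ^+ 2 - k * y1 ^+ 2 - (1 - k)) * (b ^+ 2 - (1 - k))
   + (a ^+ 2 - k * y1 ^+ 2 - (1 - k)) * (b ^+ 2 - k * y2 ^+ 2 - (1 - k))
   + 2 * a * b * (a * b - k * y1 * y2 - c * (1 - k))
   - 2 * c * (1 - k) * (a * b - k * y1 * y2 - c * (1 - k))
   - (a * b - k * y1 * y2 - c * (1 - k)) ^+ 2 by ring.
move: e2; rewrite hG subrr na nb !subrr !(mul0r, mulr0, expr0n, subr0, addr0, oppr0, sub0r) /= => /eqP.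
by rewrite mulf_eq0 (negbTE hN) /= subr_eq0 => /eqP.
Qed.

Lemma cancel4 (x y : int) : 4 * x = 4 * y -> x = y.
Proof. lia. Qed.

Lemma quad4 (kap p q : int) :
  4 * ((q - p) ^+ 2 - kap * (q + 2 * q * p + p)) =
  (2 * p + 1) ^+ 2 + (2 * q + 1) ^+ 2 - 2 * (kap + 1) * (2 * p + 1) * (2 * q + 1) + 2 * kap.
Proof. ring. Qed.

Theorem mainTheorem3 (k : nat) (t xi : nat -> nat) (r : nat)
  (hk : (2 <= k)%N) (hns : forall m : nat, (m * m)%N <> k)
  (* t is the increasing enumeration of {t >= 0 | k T_t triangular} *)
  (ht_incr : forall n : nat, (t n < t n.+1)%N)
  (ht_enum : forall m : nat, triangular (k * T m) <-> exists n, t n = m)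
  (* xi_n >= 0 with T_{xi_n} = k T_{t_n} *)
  (hxi : forall n : nat, T (xi n) = (k * T (t n))%N)
  (* r is the rank of Theorem 1, kappa = t_{r-1} + t_r *)
  (hr : (0 < r)%N)
  (hkap : ((t r.-1 + t r)%:Z : int) = (xi r)%:Z - (xi r.-1)%:Z - 1)
  (hquot : (((t (2 * r)%N)%:Q - (t r.-1)%:Q) / (t r)%:Q : rat)
           = 2 * (t r.-1 + t r)%:Q + 3)
  (hrec_t : forall n : nat, (2 * r <= n)%N ->
     ((t n)%:Z : int) = 2 * ((t r.-1 + t r)%:Z + 1) * (t (n - r)%N)%:Z
                        - (t (n - 2 * r)%N)%:Z + (t r.-1 + t r)%:Z)
  (hrec_xi : forall n : nat, (2 * r <= n)%N ->
     ((xi n)%:Z : int) = 2 * ((t r.-1 + t r)%:Z + 1) * (xi (n - r)%N)%:Z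
                         - (xi (n - 2 * r)%N)%:Z + (t r.-1 + t r)%:Z) :
  forall n : nat, (r <= n)%N ->
    let kappa : int := (t r.-1 + t r)%:Z in
    ((xi n)%:Z - (xi (n - r)%N)%:Z) ^+ 2
      - kappa * ((xi n)%:Z + 2 * (xi n)%:Z * (xi (n - r)%N)%:Z + (xi (n - r)%N)%:Z)
    = (xi r)%:Z * ((xi r.-1)%:Z + 1).
Proof.
move=> n hn kappa.
have ht0 : t 0%N = 0%N.
  have [n0 hn0] : exists n0, t n0 = 0%N.
    apply/ht_enum; exists 0%N; by rewrite /T mul0n div0n muln0.
  have mono : forall j, (t 0 <= t j)%N.
    elim=> [//|j IH]; exact: leq_trans IH (ltnW (ht_incr j)).
  by apply/eqP; rewrite -leqn0; have := mono n0; rewrite hn0.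
have hxi0 : xi 0%N = 0%N.
  have := hxi 0%N; rewrite ht0 => h.
  have : (xi 0 * (xi 0).+1 = 0)%N by rewrite Tev h /T mul0n div0n !muln0.
  by case: (xi 0).
have hc : kappa + 1 != 0 by rewrite /kappa; lia.
have hk1 : (k%:Z != 1) by lia.
have claim : forall n, (r <= n)%N ->
   4 * (((xi n)%:Z - (xi (n - r)%N)%:Z) ^+ 2
      - kappa * ((xi n)%:Z + 2 * (xi n)%:Z * (xi (n - r)%N)%:Z + (xi (n - r)%N)%:Z))
   = (1 - k%:Z) * (1 - (kappa + 1) ^+ 2) + 2 * kappa.
  move=> j hj.
  rewrite quad4 (@key _ _ _ _ _ _ hc hk1 (@normZ _ _ _ (hxi (j - r)%N)) (@normZ _ _ _ (hxi j))) //.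
  have h1 : (j + r - r = j)%N by rewrite addnK.
  have h2 : (j + r - 2 * r = j - r)%N by rewrite mul2n -addnn subnDr.
  have ex := hrec_xi (j + r)%N; rewrite h1 h2 in ex.
  have et := hrec_t (j + r)%N; rewrite h1 h2 in et.
  have hjr : (2 * r <= j + r)%N by lia.
  have := @normZ _ _ _ (hxi (j + r)%N).
  rewrite (ex hjr) (et hjr) -/kappa => <-.
  congr (_ - _ * _); congr (_ ^+ 2); ring.
apply: cancel4.
rewrite claim // -(claim r (leqnn r)) subnn hxi0.
congr (4 * _).
rewrite /kappa hkap; ring.
Qed.
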